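(* Let $\eta,\sigma>0$, $\kappa>0$, $\rho\in(-1,1)$, $b<1$ with $b\ne0$, and $K=[\alpha,\beta]$ with $-\infty\le\alpha<\beta\le\infty$. Set $B_-=\frac{(1-b)\alpha-\eta}\sigma$ and $B_+=\frac{(1-b)\beta-\eta}\sigma$. Then for every $B\in\mathbb R$ a minimiser of $\lambda\mapsto2(1-b)\delta_K(\lambda)+(\eta+\lambda+\sigma\rho B)^2$ over $\lambda\in\mathbb R$ is $$\lambda^\ast(B)=[(1-b)\alpha-(\eta+\sigma\rho B)]\mathbf 1_{\{\rho B<B_-\}}+[(1-b)\beta-(\eta+\sigma\rho B)]\mathbf 1_{\{\rho B>B_+\}}.$$ Moreover, a function $B$ solves $$B'(\tau)=-\kappa B(\tau)+\tfrac12\sigma^2B(\tau)^2+\tfrac12\tfrac b{1-b}\inf_{\lambda\in\mathbb R}\Big(2(1-b)\delta_K(\lambda)+(\eta+\lambda+\sigma\rho B(\tau))^2\Big),\quad B(0)=0,$$ if and only if $B(0)=0$ and $$B'(\tau)=\big(-r_0^-+r_1^-B+\tfrac12r_2^-B^2\big)\mathbf 1_{\{\rho B<B_-\}}+\big(-r_0+r_1B+\tfrac12r_2B^2\big)\mathbf 1_{\{B_-\le\rho B\le B_+\}}+\big(-r_0^++r_1^+B+\tfrac12r_2^+B^2\big)\mathbf 1_{\{B_+<\rho B\}},$$ where $B=B(\tau)$ on the right-hand side.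
   Context: $\delta_K(x)=-\inf_{y\in K}xy=-\alpha x\mathbf 1_{\{x>0\}}-\beta x\mathbf 1_{\{x<0\}}$ is the support function of $K$. Coefficients: $r_0^-=\tfrac12 b\alpha((1-b)\alpha-2\eta)$, $r_1^-=b\sigma\rho\alpha-\kappa$, $r_2^-=\sigma^2$; $r_0=-\frac b{2(1-b)}\eta^2$, $r_1=\frac b{1-b}\eta\sigma\rho-\kappa$, $r_2=\sigma^2(1+\frac b{1-b}\rho^2)$; $r_0^+=\tfrac12 b\beta((1-b)\beta-2\eta)$, $r_1^+=b\sigma\rho\beta-\kappa$, $r_2^+=\sigma^2$. (These arise from a constrained CRRA portfolio problem in Heston's model, with $\eta$ the market-price-of-risk coefficient, $\kappa$ the mean-reversion speed, $\sigma$ the vol-of-vol and $\rho$ the correlation.) *)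

(* Defs.v *)
From mathcomp Require Import all_boot all_order all_algebra.
From mathcomp Require Import all_classical all_reals all_analysis.
Import Order.TTheory GRing.Theory Num.Theory.
Set Implicit Arguments.
Unset Strict Implicit.
Local Open Scope ring_scope.

Section Defs.
Variable R : realType.
Implicit Types (eta sigma kappa rho b x l : R) (a c : \bar R).

(* support function of K = [a, c]:
   delta_K(x) = - a x 1_{x>0} - c x 1_{x<0}  (with 0 * (+-oo) = 0) *)
Definition deltaK a c (x : R) : \bar R :=
  (- (a * x%:E * (0 < x)%R%:R%:E) - c * x%:E * (x < 0)%R%:R%:E)%E.

Definition objK b eta sigma rho a c (B l : R) : \bar R :=
  ((2 * (1 - b))%:E * deltaK a c l + ((eta + l + sigma * rho * B) ^+ 2)%:E)%E.

Definition Bminus b eta sigma a : \bar R :=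
  (((1 - b)%:E * a - eta%:E) * (sigma^-1)%:E)%E.
Definition Bplus b eta sigma c : \bar R :=
  (((1 - b)%:E * c - eta%:E) * (sigma^-1)%:E)%E.

(* the candidate minimiser lambda^*(B) (fine a / fine c only used when the
   corresponding indicator is 1, in which case the endpoint is finite) *)
Definition lamstar b eta sigma rho a c (B : R) : R :=
  ((1 - b) * fine a - (eta + sigma * rho * B))
      * ((rho * B)%:E < Bminus b eta sigma a)%E%:R
  + ((1 - b) * fine c - (eta + sigma * rho * B))
      * (Bplus b eta sigma c < (rho * B)%:E)%E%:R.

Definition hjb_rhs kappa b eta sigma rho a c (B : R) : \bar R :=
  ((- kappa * B + 2^-1 * sigma ^+ 2 * B ^+ 2)%:E
   + (2^-1 * (b / (1 - b)))%:E
     * ereal_inf (range (objK b eta sigma rho a c B)))%E.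

Definition r0m b eta a : R := 2^-1 * b * fine a * ((1 - b) * fine a - 2 * eta).
Definition r1m kappa b sigma rho a : R := b * sigma * rho * fine a - kappa.
Definition r2m sigma : R := sigma ^+ 2.
Definition r0 b eta : R := - (b / (2 * (1 - b))) * eta ^+ 2.
Definition r1 kappa b eta sigma rho : R := b / (1 - b) * eta * sigma * rho - kappa.
Definition r2 b sigma rho : R := sigma ^+ 2 * (1 + b / (1 - b) * rho ^+ 2).
Definition r0p b eta c : R := 2^-1 * b * fine c * ((1 - b) * fine c - 2 * eta).
Definition r1p kappa b sigma rho c : R := b * sigma * rho * fine c - kappa.
Definition r2p sigma : R := sigma ^+ 2.

Definition pw_rhs kappa b eta sigma rho a c (B : R) : R :=
  (- r0m b eta a + r1m kappa b sigma rho a * B + 2^-1 * r2m sigma * B ^+ 2)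
    * ((rho * B)%:E < Bminus b eta sigma a)%E%:R
  + (- r0 b eta + r1 kappa b eta sigma rho * B + 2^-1 * r2 b sigma rho * B ^+ 2)
    * ((Bminus b eta sigma a <= (rho * B)%:E)
       && ((rho * B)%:E <= Bplus b eta sigma c))%E%:R
  + (- r0p b eta c + r1p kappa b sigma rho c * B + 2^-1 * r2p sigma * B ^+ 2)
    * (Bplus b eta sigma c < (rho * B)%:E)%E%:R.

End Defs.

(* Main.v *)
Require Import Defs.
From mathcomp Require Import all_boot all_order all_algebra.
From mathcomp Require Import all_classical all_reals all_analysis.
From mathcomp Require Import ring lra.
Import Order.TTheory GRing.Theory Num.Theory.
Local Open Scope ring_scope.

Section H.
Variable R : realType.
Implicit Types (a c : \bar R) (l y b eta sigma rho B kappa : R).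

Lemma deltaK_pos a c l : 0 < l -> deltaK a c l = (- (a * l%:E))%E.
Proof. by move=> l0; rewrite /deltaK l0 ltNge (ltW l0) /= mule1 mule0 sube0. Qed.

Lemma deltaK_neg a c l : l < 0 -> deltaK a c l = (- (c * l%:E))%E.
Proof. by move=> l0; rewrite /deltaK l0 ltNge (ltW l0) /= mule1 mule0 oppe0 add0e. Qed.

Lemma deltaK0 a c : deltaK a c 0 = 0%E.
Proof. by rewrite /deltaK ltxx /= !mule0 oppe0 adde0. Qed.

Lemma deltaK_ge a c y l : (a <= y%:E)%E -> (y%:E <= c)%E ->
  ((- (y * l))%:E <= deltaK a c l)%E.
Proof.
move=> ay yc; case: (ltgtP l 0) => [l0|l0|->].
- rewrite deltaK_neg // -mulrN -muleN -EFinN EFinM.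
  by apply: lee_wpmul2r => //; rewrite lee_fin oppr_ge0 ltW.
- rewrite deltaK_pos // EFinN leeN2 EFinM.
  by apply: lee_wpmul2r => //; rewrite lee_fin ltW.
- by rewrite deltaK0 mulr0 oppr0.
Qed.

Lemma objK_ge b eta sigma rho a c B y l : b < 1 -> (a <= y%:E)%E -> (y%:E <= c)%E ->
  ((2 * (1 - b) * (- (y * l)) + (eta + l + sigma * rho * B) ^+ 2)%:E
    <= objK b eta sigma rho a c B l)%E.
Proof.
move=> b1 ay yc; rewrite /objK EFinD EFinM; apply: leeD => //.
apply: lee_wpmul2l; first by rewrite lee_fin; lra.
exact: deltaK_ge.
Qed.

Lemma Bm_fin b eta sigma (a' : R) : Bminus b eta sigma a'%:E = (((1-b)*a' - eta)/sigma)%:E.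
Proof. by rewrite /Bminus !EFinM EFinB. Qed.
Lemma Bp_fin b eta sigma (a' : R) : Bplus b eta sigma a'%:E = (((1-b)*a' - eta)/sigma)%:E.
Proof. by rewrite /Bplus !EFinM EFinB. Qed.
Lemma Bm_Ny b eta sigma : b < 1 -> 0 < sigma -> Bminus b eta sigma -oo = -oo%E.
Proof.
move=> b1 s0; rewrite /Bminus gt0_muleNy ?lte_fin ?subr_gt0 // addNye gt0_mulNye //.
by rewrite lte_fin invr_gt0.
Qed.
Lemma Bp_y b eta sigma : b < 1 -> 0 < sigma -> Bplus b eta sigma +oo = +oo%E.
Proof.
move=> b1 s0; rewrite /Bplus gt0_muley ?lte_fin ?subr_gt0 // addye // gt0_mulye //.
by rewrite lte_fin invr_gt0.
Qed.

Lemma key kappa b eta sigma rho a c B : 0 < sigma -> b < 1 -> (a < c)%E ->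
  exists y, [/\ (a <= y%:E)%E, (y%:E <= c)%E,
    lamstar b eta sigma rho a c B = (1-b)*y - (eta + sigma * rho * B),
    deltaK a c (lamstar b eta sigma rho a c B) = (- (y * lamstar b eta sigma rho a c B))%:E &
    pw_rhs kappa b eta sigma rho a c B = - kappa * B + 2^-1 * sigma^+2 * B^+2
       - 2^-1 * b * (1-b) * y^+2 + b * y * (eta + sigma * rho * B)].
Proof.
move=> s0 b1 ac.
case: a ac => [a'| |] ac; case: c ac => [c'| |] ac //.
- rewrite lte_fin in ac.
  rewrite /lamstar /pw_rhs !Bm_fin !Bp_fin !lte_fin !lee_fin /=.
  rewrite !ltr_pdivlMr // !ltr_pdivrMr // !ler_pdivlMr // !ler_pdivrMr //.
  case: (ltrP (rho*B*sigma) ((1-b)*a' - eta)) => h1;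
  case: (ltrP ((1-b)*c'-eta) (rho*B*sigma)) => h2 /=.
  + exfalso; nra.
  + exists a'; rewrite ?mulr1 ?mulr0 ?addr0 ?add0r; split.
    * by [].
    * by rewrite lee_fin ltW.
    * by [].
    * by rewrite deltaK_pos ?EFinN ?EFinM //; nra.
    * by rewrite /r0m /r1m /r2m /=; field.
  + exists c'; rewrite ?mulr1 ?mulr0 ?addr0 ?add0r; split.
    * by rewrite lee_fin ltW.
    * by [].
    * by [].
    * by rewrite deltaK_neg ?EFinN ?EFinM //; nra.
    * by rewrite /r0p /r1p /r2p /=; field.
  + exists ((eta + sigma * rho * B) / (1 - b)); rewrite ?mulr1 ?mulr0 ?addr0 ?add0r; split.
    * by rewrite lee_fin ler_pdivlMr ?subr_gt0 //; nra.
    * by rewrite lee_fin ler_pdivrMr ?subr_gt0 //; nra.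
    * by field; lra.
    * by rewrite deltaK0 mulr0 oppr0.
    * by rewrite /r0 /r1 /r2; field; lra.
- rewrite /lamstar /pw_rhs !Bm_fin Bp_y // !lte_fin !lee_fin /= leey andbT.
  rewrite !ltr_pdivlMr // !ler_pdivrMr //.
  case: (ltrP (rho*B*sigma) ((1-b)*a' - eta)) => h1 /=.
  + exists a'; rewrite ?mulr1 ?mulr0 ?addr0 ?add0r; split.
    * by [].
    * by rewrite leey.
    * by [].
    * by rewrite deltaK_pos ?EFinN ?EFinM //; nra.
    * by rewrite /r0m /r1m /r2m /=; field.
  + exists ((eta + sigma * rho * B) / (1 - b)); rewrite ?mulr1 ?mulr0 ?addr0 ?add0r; split.
    * by rewrite lee_fin ler_pdivlMr ?subr_gt0 //; nra.
    * by rewrite leey.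
    * by field; lra.
    * by rewrite deltaK0 mulr0 oppr0.
    * by rewrite /r0 /r1 /r2; field; lra.
- rewrite /lamstar /pw_rhs Bm_Ny // !Bp_fin // !lte_fin !lee_fin /= leNye /=.
  rewrite !ltr_pdivrMr // !ler_pdivlMr //.
  case: (ltrP ((1-b)*c'-eta) (rho*B*sigma)) => h2 /=.
  + exists c'; rewrite ?mulr1 ?mulr0 ?addr0 ?add0r; split.
    * by rewrite leNye.
    * by [].
    * by [].
    * by rewrite deltaK_neg ?EFinN ?EFinM //; nra.
    * by rewrite /r0p /r1p /r2p /=; field.
  + exists ((eta + sigma * rho * B) / (1 - b)); rewrite ?mulr1 ?mulr0 ?addr0 ?add0r; split.
    * by rewrite leNye.
    * by rewrite lee_fin ler_pdivrMr ?subr_gt0 //; nra.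
    * by field; lra.
    * by rewrite deltaK0 mulr0 oppr0.
    * by rewrite /r0 /r1 /r2; field; lra.
- rewrite /lamstar /pw_rhs Bm_Ny // Bp_y // /= leNye leey /=.
  exists ((eta + sigma * rho * B) / (1 - b)); rewrite ?mulr1 ?mulr0 ?addr0 ?add0r; split.
    * by rewrite leNye.
    * by rewrite leey.
    * by field; lra.
    * by rewrite deltaK0 mulr0 oppr0.
    * by rewrite /r0 /r1 /r2; field; lra.
Qed.

Lemma part1 b eta sigma rho a c B l : 0 < sigma -> b < 1 -> (a < c)%E ->
  (objK b eta sigma rho a c B (lamstar b eta sigma rho a c B)
       <= objK b eta sigma rho a c B l)%E.
Proof.
move=> s0 b1 ac.
have [y [ay yc hL hd _]] := key 0 b eta sigma rho a c B s0 b1 ac.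
rewrite /objK hd.
apply: le_trans (objK_ge b eta sigma rho a c B y l b1 ay yc).
rewrite -EFinM -EFinD lee_fin hL.
have := sqr_ge0 (l - ((1-b)*y - (eta + sigma * rho * B))); nra.
Qed.

Lemma hjb_eq kappa b eta sigma rho a c B : 0 < sigma -> b < 1 -> (a < c)%E ->
  hjb_rhs kappa b eta sigma rho a c B = (pw_rhs kappa b eta sigma rho a c B)%:E.
Proof.
move=> s0 b1 ac.
have [y [ay yc hL hd hpw]] := key kappa b eta sigma rho a c B s0 b1 ac.
rewrite /hjb_rhs.
have -> : ereal_inf (range (objK b eta sigma rho a c B)) =
    objK b eta sigma rho a c B (lamstar b eta sigma rho a c B).
  apply/eqP; rewrite eq_le; apply/andP; split.
    by apply: ereal_inf_lbound; exists (lamstar b eta sigma rho a c B).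
  by apply/ereal_infP => _ [l _ <-]; exact: part1.
rewrite /objK hd -!EFinM -!EFinD hpw hL; congr EFin.
by field; lra.
Qed.
End H.

Theorem lemma2p3 (R : realType) (eta sigma kappa rho b : R) (a c : \bar R) :
  0 < eta -> 0 < sigma -> 0 < kappa -> -1 < rho < 1 -> b < 1 -> b != 0 ->
  (a < c)%E ->
  (forall B l : R,
      (objK b eta sigma rho a c B (lamstar b eta sigma rho a c B)
       <= objK b eta sigma rho a c B l)%E) /\
  (forall Bf : R -> R,
      (Bf 0 = 0 /\
       forall tau : R, 0 <= tau ->
         derivable Bf tau 1 /\
         ((derive1 Bf tau)%:E = hjb_rhs kappa b eta sigma rho a c (Bf tau))%E)
      <->
      (Bf 0 = 0 /\
       forall tau : R, 0 <= tau ->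
         derivable Bf tau 1 /\
         derive1 Bf tau = pw_rhs kappa b eta sigma rho a c (Bf tau))).

Proof.
move=> e0 s0 k0 rho1 b1 b0 ac; split.
  by move=> B l; exact: part1.
move=> Bf; split=> -[h0 h]; split=> // tau t0; have [d e] := h tau t0; split=> //.
  by move: e; rewrite hjb_eq // => -[].
by rewrite hjb_eq // e.
Qed.
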